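(* Let $(S,\mathscr{S})$ be a measurable space, $n\le N$, and $X=(X_1,\ldots,X_n)$ an exchangeable random element of $S^n$. The functional $\mathcal E^N_n$ defined on the linear subspace $U^N_n(b(S^n))\subset b(S^N)$ by $\mathcal E^N_n(U^N_ng):=\mathbb{E}\,g(X_1,\ldots,X_n)$ (which is well defined) is a bounded linear map into $\mathbb{R}$, and its operator norm with respect to the sup norm is at least $1$.
   Context: $b(S^k)$ is the Banach space of bounded measurable functions $S^k\to\mathbb{R}$ with the sup norm. $X$ is exchangeable if its law is invariant under all permutations of coordinates. With $\mathfrak S[n,N]$ the set of injections $\{1,\ldots,n\}\to\{1,\ldots,N\}$ and $(N)_n=N(N-1)\cdots(N-n+1)$, $U^N_ng(x_1,\ldots,x_N)=\frac1{(N)_n}\sum_{\sigma\in\mathfrak S[n,N]}g(x_{\sigma(1)},\ldots,x_{\sigma(n)})$. *)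

(* Defs.v *)
From HB Require Import structures.
From mathcomp Require Import all_boot all_order all_algebra perm.
From mathcomp Require Import all_classical all_reals all_analysis.
Set Implicit Arguments. Unset Strict Implicit. Unset Printing Implicit Defensive.
Import Order.TTheory GRing.Theory Num.Theory.
Local Open Scope classical_set_scope.
Local Open Scope ring_scope.

(* S^k is modelled by [k.-tuple S], equipped with the
   library's product sigma-algebra (generated by the coordinate projections). *)

Definition bmeas {d} (S : measurableType d) (R : realType) (k : nat)
  (g : k.-tuple S -> R) : Prop :=
  measurable_fun setT g /\ exists M : R, forall x, `|g x| <= M.

Definition supnorm {T : Type} (R : realType) (f : T -> R) : R :=
  sup (range (fun x => `|f x|)).

Definition subtuple {S : Type} (n N : nat) (s : {ffun 'I_n -> 'I_N})
  (x : N.-tuple S) : n.-tuple S := [tuple tnth x (s i) | i < n].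

Definition U_op {S : Type} (R : realType) (n N : nat) (g : n.-tuple S -> R)
  (x : N.-tuple S) : R :=
  (N ^_ n)%:R^-1 * \sum_(s : {ffun 'I_n -> 'I_N} | injectiveb s) g (subtuple s x).

Definition perm_tuple {S : Type} (n : nat) (p : {perm 'I_n}) (x : n.-tuple S)
  : n.-tuple S := [tuple tnth x (p i) | i < n].

Definition exchangeable {d d'} (Om : measurableType d') (S : measurableType d)
  (R : realType) (P : probability Om R) (n : nat) (X : Om -> n.-tuple S) : Prop :=
  forall (p : {perm 'I_n}) (A : set (n.-tuple S)), measurable A ->
    P ((fun w => perm_tuple p (X w)) @^-1` A) = P (X @^-1` A).
Arguments U_op {S R n} N g x.

(* Main.v *)
Require Import Defs.
From HB Require Import structures.
From mathcomp Require Import all_boot all_order all_algebra.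
From mathcomp Require Import all_classical all_reals all_analysis.
From mathcomp Require Import perm zify measurable_realfun ring.
Import Order.TTheory GRing.Theory Num.Theory.
Set Implicit Arguments. Unset Strict Implicit. Unset Printing Implicit Defensive.
Local Open Scope ring_scope.



Lemma subtupleK (S : Type) n m N (s : {ffun 'I_n -> 'I_m}) (t : {ffun 'I_m -> 'I_N})
  (x : N.-tuple S) : subtuple s (subtuple t x) = subtuple [ffun i => t (s i)] x.
Proof. by apply: eq_from_tnth => i; rewrite !tnth_mktuple ffunE. Qed.

Lemma perm_sub (S : Type) n N (p : {perm 'I_n}) (s : {ffun 'I_n -> 'I_N}) (x : N.-tuple S) :
  perm_tuple p (subtuple s x) = subtuple [ffun i => s (p i)] x.
Proof. by apply: eq_from_tnth => i; rewrite !tnth_mktuple ffunE. Qed.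

Lemma perm_perm (S : Type) n (p q : {perm 'I_n}) (x : n.-tuple S) :
  perm_tuple p (perm_tuple q x) = perm_tuple (p * q) x.
Proof. by apply: eq_from_tnth => i; rewrite !tnth_mktuple permM. Qed.

Definition fs (S : Type) (R : zmodType) n (g : n.-tuple S -> R) (z : n.-tuple S) : R :=
  \sum_(p : {perm 'I_n}) g (perm_tuple p z).

Lemma fs_perm (S : Type) (R : zmodType) n (g : n.-tuple S -> R) q z :
  fs g (perm_tuple q z) = fs g z.
Proof.
rewrite /fs (reindex_inj (mulIg q^-1)%g) /=; apply: eq_bigr => p _.
by rewrite perm_perm -mulgA mulVg mulg1.
Qed.

Definition raw (S : Type) (R : zmodType) n N (g : n.-tuple S -> R) (y : N.-tuple S) : R :=
  \sum_(s : {ffun 'I_n -> 'I_N} | injectiveb s) g (subtuple s y).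

Lemma inj_comp_perm n N (p : {perm 'I_n}) (s : {ffun 'I_n -> 'I_N}) :
  injectiveb [ffun i => s (p i)] = injectiveb s.
Proof.
apply/injectiveP/injectiveP => H i j.
  move=> e; apply: (can_inj (permKV p)); apply: H; by rewrite !ffunE !permKV.
by rewrite !ffunE => /H /perm_inj.
Qed.

Lemma fs_raw (S : Type) (R : zmodType) n N (g : n.-tuple S -> R) (y : N.-tuple S) :
  \sum_(s : {ffun 'I_n -> 'I_N} | injectiveb s) fs g (subtuple s y) = raw g y *+ #|{perm 'I_n}|.
Proof.
rewrite /fs exchange_big /= -sumr_const; apply: eq_bigr => p _.
have hinj : injective (fun s : {ffun 'I_n -> 'I_N} => [ffun i => s (p i)]).
  move=> s1 s2 e; apply/ffunP => j; have := congr1 (fun f : {ffun 'I_n -> 'I_N} => f (p^-1 j)%g) e.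
  by rewrite /= !ffunE permKV.
under eq_bigr do rewrite perm_sub.
rewrite /raw [RHS](reindex_inj hinj) /=; apply: eq_bigl => s; by rewrite inj_comp_perm.
Qed.

Lemma perm_of_counts n (t u : {ffun 'I_n -> 'I_n}) :
  (forall a, #|[set i | u i == a]| = #|[set i | t i == a]|) ->
  exists p : {perm 'I_n}, forall i, u i = t (p i).
Proof.
move=> H.
have cnt (v : {ffun 'I_n -> 'I_n}) a : count_mem a [tuple v i | i < n] = #|[set i | v i == a]|.
  rewrite cardsE /= cardE count_map -size_filter /enum_mem; congr size.
  rewrite -filter_predI; apply: eq_filter => i /=; by rewrite !inE andbT.
have : perm_eq [tuple u i | i < n] [tuple t i | i < n].
  by apply/allP => a _ /=; rewrite !cnt H.
case/tuple_permP => p e; exists p => i.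
have := congr1 (fun w : n.-tuple 'I_n => tnth w i) (val_inj e); by rewrite /= !tnth_mktuple.
Qed.


Definition phi n N (hn : (0 < n)%N) (t : {ffun 'I_n -> 'I_n}) : {ffun 'I_N -> 'I_n} :=
  [ffun j : 'I_N => if (insub (val j) : option 'I_n) is Some i then t i else Ordinal hn].
Definition zc n (hn : (0 < n)%N) (t : {ffun 'I_n -> 'I_n}) := #|[set i | t i == Ordinal hn]|.

Lemma widen_inj n N (h : (n <= N)%N) : injective (widen_ord h).
Proof. by move=> i j /(congr1 val) /= /val_inj. Qed.

Lemma phiW n N (hn : (0 < n)%N) (hnN : (n <= N)%N) t (i : 'I_n) :
  phi N hn t (widen_ord hnN i) = t i.
Proof.
rewrite ffunE; case: insubP => [i' _ e|]; last by rewrite /= ltn_ord.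
by congr (t _); apply: val_inj; rewrite e.
Qed.

Lemma phi_set n N (hn : (0 < n)%N) (hnN : (n <= N)%N) t (P : pred 'I_n) :
  ~~ P (Ordinal hn) ->
  [set j | P (phi N hn t j)] = widen_ord hnN @: [set i | P (t i)].
Proof.
move=> nP; apply/finset.setP => j; rewrite inE.
have [jn|jn] := ltnP j n.
  have -> : j = widen_ord hnN (Ordinal jn) by apply: val_inj.
  by rewrite phiW (mem_imset _ _ (@widen_inj _ _ hnN)) inE.
rewrite ffunE; case: insubP => [i' /=|_]; first by rewrite ltnNge jn.
rewrite (negbTE nP); apply/esym/finset.imsetP => -[i _ e].
by move: jn; rewrite e /= leqNgt ltn_ord.
Qed.

Lemma card_pre n N (s : {ffun 'I_n -> 'I_N}) (B : {set 'I_N}) :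
  injective s -> #|[set i | s i \in B]| = #|B :&: s @: [set: 'I_n]|.
Proof.
move=> sinj; rewrite -(card_imset _ sinj); apply: eq_card => j; rewrite !inE.
apply/finset.imsetP/andP => [[i]|[Hj /finset.imsetP [i _ e]]].
  by rewrite inE => Hi ->; split => //; apply: imset_f.
by exists i; rewrite // inE -e.
Qed.

Lemma counts n N (hn : (0 < n)%N) (hnN : (n <= N)%N) t (s : {ffun 'I_n -> 'I_N}) :
  injective s -> (zc hn [ffun i => phi N hn t (s i)] <= zc hn t)%N ->
  forall a, #|[set i | [ffun i => phi N hn t (s i)] i == a]| = #|[set i | t i == a]|.
Proof.
move=> sinj hz.
set i0 := Ordinal hn.
set Im := s @: [set: 'I_n].
have cIm : #|Im| = n by rewrite card_imset // cardsT card_ord.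
set NZ := [set j | phi N hn t j != i0].
have eNZ : NZ = widen_ord hnN @: [set i | t i != i0] by rewrite /NZ (@phi_set n N hn hnN t (fun a => a != i0)) //= eqxx.
have cNZ : (#|NZ| + zc hn t)%N = n.
  rewrite eNZ card_imset; last exact: widen_inj.
  have -> : [set i | t i != i0] = ~: [set i | t i == i0] by apply/finset.setP => i; rewrite !inE.
  by rewrite /zc addnC finset.cardsC card_ord.
have zu : zc hn [ffun i => phi N hn t (s i)] = #|~: NZ :&: Im|.
  rewrite /zc -card_pre //; apply: eq_card => i; rewrite !inE ffunE negbK.
  by [].
have cID := finset.cardsID NZ Im.
rewrite zu in hz.
have eI : Im :&: NZ = NZ.
  apply/eqP; rewrite finset.eqEcard finset.subsetIr /=.
  have : (#|Im :\: NZ| = #|~: NZ :&: Im|)%N by rewrite finset.setDE finset.setIC.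
  move=> e; rewrite e cIm in cID; move: cID hz cNZ; move: #|Im :&: NZ| #|~: NZ :&: Im| #|NZ| (zc hn t) => a b c d. lia.
have sub : NZ \subset Im by rewrite -eI finset.subsetIl.
move=> a; have [->|anz] := eqVneq a i0.
  rewrite -/(zc hn _) zu.
  have : (#|Im :\: NZ| = #|~: NZ :&: Im|)%N by rewrite finset.setDE finset.setIC.
  move=> e2; rewrite eI cIm in cID; rewrite -e2 -/(zc hn t); move: cID cNZ; move: #|NZ| #|Im :\: NZ| (zc hn t) => p q r; lia.
rewrite (_ : [set i | [ffun i => phi N hn t (s i)] i == a] =
          [set i | s i \in [set j | phi N hn t j == a]]); last first.
  by apply/finset.setP => i; rewrite !inE ffunE.
rewrite card_pre //.
have sa : [set j | phi N hn t j == a] \subset Im.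
  apply: fintype.subset_trans sub; apply/fintype.subsetP => j; rewrite !inE => /eqP ->; exact: anz.
rewrite (finset.setIidPl sa) (@phi_set n N hn hnN t (fun b => b == a)) /=; last by rewrite eq_sym.
by rewrite card_imset //; exact: widen_inj.
Qed.


Lemma step (S : Type) (R : numDomainType) n N (hn : (0 < n)%N) (hnN : (n <= N)%N)
  (g : n.-tuple S -> R) (M C : R) (M0 : 0 <= M) (C0 : 0 <= C)
  (HM : forall y : N.-tuple S, `|raw g y| <= M) k
  (Hk : forall x t, (k < zc hn t)%N -> `|fs g (subtuple t x)| <= C * M) :
  forall x t, (k <= zc hn t)%N ->
    `|fs g (subtuple t x)| <= (#|{perm 'I_n}|%:R + #|{ffun 'I_n -> 'I_N}|%:R * C) * M.
Proof.
move=> x t hk.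
set y := subtuple (phi N hn t) x.
pose u := fun s : {ffun 'I_n -> 'I_N} => [ffun i => phi N hn t (s i)].
have E : \sum_(s : {ffun 'I_n -> 'I_N} | injectiveb s) fs g (subtuple (u s) x) = raw g y *+ #|{perm 'I_n}|.
  by rewrite -fs_raw; apply: eq_bigr => s _; rewrite /y subtupleK.
rewrite (bigID (fun s => (zc hn (u s) <= zc hn t)%N)) /= in E.
have good : forall s : {ffun 'I_n -> 'I_N}, injectiveb s && (zc hn (u s) <= zc hn t)%N ->
    fs g (subtuple (u s) x) = fs g (subtuple t x).
  move=> s /andP [/injectiveP sinj hz].
  have [p hp] := perm_of_counts (fun a => (counts hnN sinj hz a)).
  have -> : subtuple (u s) x = perm_tuple p (subtuple t x).
    by apply: eq_from_tnth => i; rewrite !tnth_mktuple hp.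
  exact: fs_perm.
rewrite (eq_bigr _ good) sumr_const in E.
set G := #|_| in E.
set fz := fs g (subtuple t x) in E *.
set Bad := \sum_(i | _) _ in E.
have G0 : (0 < G)%N.
  apply/card_gt0P; exists [ffun i => widen_ord hnN i]; rewrite unfold_in /=.
  have -> : u [ffun i => widen_ord hnN i] = t.
    by apply/ffunP => i; rewrite /u ffunE [X in phi _ _ _ X]ffunE phiW.
  rewrite leqnn andbT; apply/injectiveP => i j; rewrite !ffunE; exact: widen_inj.
have hB : `|Bad| <= (C * M) *+ #|{ffun 'I_n -> 'I_N}|.
  apply: le_trans (ler_norm_sum _ _ _) _.
  have h1 : forall s : {ffun 'I_n -> 'I_N}, injectiveb s && ~~ (zc hn (u s) <= zc hn t)%N ->
      `|fs g (subtuple (u s) x)| <= C * M.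
    move=> s /andP [_]; rewrite -ltnNge => hs; apply: Hk.
    exact: leq_ltn_trans hk hs.
  apply: le_trans (ler_sum _ h1) _.
  rewrite sumr_const; apply: ler_wpMn2l; first exact: mulr_ge0.
  exact: (max_card (T := {ffun 'I_n -> 'I_N})).
have e2 : fz *+ G = raw g y *+ #|{perm 'I_n}| - Bad by rewrite -E addrK.
clearbody G.
apply: (@le_trans _ _ (`|fz| *+ G)).
  by rewrite -(prednK G0) mulrS lerDl mulrn_wge0.
rewrite -normrMn e2 mulrDl mulr_natl -mulrA mulr_natl.
apply: le_trans (ler_normB _ _) _; apply: lerD => //.
by rewrite normrMn; apply: ler_wMn2r.
Qed.

Lemma comb_iter (S : Type) (R : numDomainType) n N (hn : (0 < n)%N) (hnN : (n <= N)%N) j :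
  exists C : R, 0 <= C /\ forall (g : n.-tuple S -> R) M, 0 <= M ->
    (forall y : N.-tuple S, `|raw g y| <= M) ->
    forall x t, (n.+1 - j <= zc hn t)%N -> `|fs g (subtuple t x)| <= C * M.
Proof.
elim: j => [|j [C [C0 HC]]].
  exists 0; split => // g M _ _ x t; rewrite subn0 => h.
  have := max_card (mem [set i | t i == Ordinal hn]); rewrite card_ord.
  by rewrite /zc in h; move=> h2; have := leq_trans h h2; rewrite ltnn.
exists (#|{perm 'I_n}|%:R + #|{ffun 'I_n -> 'I_N}|%:R * C); split.
  by rewrite addr_ge0 // mulr_ge0.
move=> g M M0 HM x t ht; apply: (step hnN M0 C0 HM (k := n - j)).
  move=> x' t' h'; apply: HC => //; lia.
lia.
Qed.

Lemma comb_bound (S : Type) (R : numDomainType) n N (hn : (0 < n)%N) (hnN : (n <= N)%N) :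
  exists C : R, 0 <= C /\ forall (g : n.-tuple S -> R) M, 0 <= M ->
    (forall y : N.-tuple S, `|raw g y| <= M) -> forall x, `|fs g x| <= C * M.
Proof.
have [C [C0 HC]] := comb_iter S R hn hnN n.
exists C; split => // g M M0 HM x.
have -> : x = subtuple [ffun i => i] x by apply: eq_from_tnth => i; rewrite tnth_mktuple ffunE.
apply: HC => //; rewrite subSnn /zc.
have -> : [set i | [ffun i => i] i == Ordinal hn] = [set Ordinal hn].
  by apply/finset.setP => i; rewrite !inE ffunE.
by rewrite finset.cards1.
Qed.

Local Open Scope classical_set_scope.
Local Open Scope ring_scope.


Lemma bounded_of (T : Type) (R : realType) (f : T -> R) (M : R) (A : set T) :
  (forall x, `|f x| <= M) -> [bounded f x | x in A].
Proof.
move=> h; exists M; split; first exact: num_real.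
by move=> K MK x _ /=; exact: le_trans (h x) (ltW MK).
Qed.

Lemma mperm0 d (S : measurableType d) n (p : {perm 'I_n}) :
  measurable_fun setT (perm_tuple (S := S) p).
Proof.
apply/measurable_fun_tnthP => i.
have -> : (fun x : n.-tuple S => tnth x i) \o perm_tuple p = (fun x => tnth x (p i)).
  by apply/funext => x /=; rewrite tnth_mktuple.
exact: measurable_tnth.
Qed.

Lemma P1 (R : realType) d' (Om : measurableType d') (P : probability Om R) :
  (P : {measure set Om -> \bar R}) setT = 1%E.
Proof. exact: probability_setT. Qed.

Lemma integ (R : realType) d (S : measurableType d) d' (Om : measurableType d')
  (P : probability Om R) n (X : Om -> n.-tuple S) (mX : measurable_fun setT X)
  (g : n.-tuple S -> R) : measurable_fun setT g -> (exists M, forall x, `|g x| <= M) ->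
  P.-integrable setT (EFin \o (fun w => g (X w))).
Proof.
move=> mg [M hM]; apply: measurable_bounded_integrable => //.
- by rewrite P1 ltry.
- exact: measurableT_comp mg mX.
- by apply: bounded_of => w; exact: hM.
Qed.

Lemma Rint_bound (R : realType) d' (Om : measurableType d')
  (P : probability Om R) (h : Om -> R) (B : R) : measurable_fun setT h ->
  (forall w, `|h w| <= B) -> `|Rintegral P setT h| <= B.
Proof.
move=> mh hB.
have ih : P.-integrable setT (EFin \o h).
  apply: measurable_bounded_integrable => //; first by rewrite P1 ltry.
  exact: bounded_of hB.
apply: le_trans (le_normr_Rintegral _ ih) _ => //.
apply: le_trans (le_Rintegral (f2 := fun=> B) _ (integrable_norm ih) _ _) _ => //.
- apply: measurable_bounded_integrable => //; first by rewrite P1 ltry.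
  by apply: (bounded_of (M := `|B|)) => w.
- by move=> w _; exact: hB.
by rewrite Rintegral_cst // P1 /= mulr1.
Qed.


Lemma exch_int (R : realType) d (S : measurableType d) d' (Om : measurableType d')
  (P : probability Om R) n (X : Om -> n.-tuple S) (mX : measurable_fun setT X)
  (hX : exchangeable P X) (g : n.-tuple S -> R) (mg : measurable_fun setT g)
  (bg : exists M, forall x, `|g x| <= M) (p : {perm 'I_n}) :
  Rintegral P setT (fun w => g (perm_tuple p (X w))) = Rintegral P setT (fun w => g (X w)).
Proof.
have mXp : measurable_fun setT (fun w => perm_tuple p (X w)).
  exact: measurableT_comp (mperm0 p) mX.
have mge : measurable_fun [set: n.-tuple S] (EFin \o g) by exact/measurable_EFinP.
have bgp : exists M, forall x, `|(g \o perm_tuple p) x| <= M.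
  by case: bg => M hM; exists M => x; exact: hM.
have i1 := integ P mXp mg bg.
have i2 := integ P mX mg bg.
have h1 := integral_pushforward mXp mge i1 measurableT.
have h2 := integral_pushforward mX mge i2 measurableT.
rewrite preimage_setT in h1 h2.
rewrite /Rintegral; congr fine.
transitivity (\int[P]_(x in setT) ((EFin \o g) \o (fun w => perm_tuple p (X w))) x)%E => //.
rewrite -h1.
transitivity (\int[P]_(x in setT) ((EFin \o g) \o X) x)%E => //.
rewrite -h2.
apply: eq_measure_integral => A mA _.
exact: (hX p A mA).
Qed.

Lemma E_fs (R : realType) d (S : measurableType d) d' (Om : measurableType d')
  (P : probability Om R) n (X : Om -> n.-tuple S) (mX : measurable_fun setT X)
  (hX : exchangeable P X) (g : n.-tuple S -> R) (mg : measurable_fun setT g)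
  (bg : exists M, forall x, `|g x| <= M) :
  Rintegral P setT (fun w => fs g (X w)) =
  #|{perm 'I_n}|%:R * Rintegral P setT (fun w => g (X w)).
Proof.
pose F := fun (p : {perm 'I_n}) w => (g (perm_tuple p (X w)))%:E.
have ip : forall p : {perm 'I_n}, P.-integrable setT (F p).
  move=> p; exact: (integ P (measurableT_comp (mperm0 p) mX) mg bg).
have -> : Rintegral P setT (fun w => fs g (X w)) =
    \sum_(p : {perm 'I_n}) Rintegral P setT (fun w => g (perm_tuple p (X w))).
  rewrite /Rintegral sum_fine; last by move=> p _; exact: (integrable_fin_num measurableT (ip p)).
  congr fine; rewrite -(integral_sum measurableT ip).
  by apply: eq_integral => w _; rewrite /fs sumEFin.
under eq_bigr do rewrite (exch_int mX hX mg bg).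
by rewrite sumr_const mulr_natl.
Qed.

Lemma Ebound (R : realType) d (S : measurableType d) d' (Om : measurableType d')
  (P : probability Om R) n N (hn : (0 < n)%N) (hnN : (n <= N)%N)
  (X : Om -> n.-tuple S) (mX : measurable_fun setT X) (hX : exchangeable P X) :
  exists C : R, 0 <= C /\ forall g, bmeas g -> forall M, 0 <= M ->
    (forall y : N.-tuple S, `|U_op N g y| <= M) ->
    `|Rintegral P setT (fun w => g (X w))| <= C * M.
Proof.
have [C0 [C00 HC]] := comb_bound S R hn hnN.
pose K := #|{perm 'I_n}|%:R : R.
have K0 : 0 < K by rewrite ltr0n; apply/card_gt0P; exists 1%g.
pose Nn := (N ^_ n)%:R : R.
have Nn0 : 0 < Nn by rewrite ltr0n ffact_gt0.
exists (C0 * Nn / K * 1); split.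
  by rewrite mulr1 mulr_ge0 ?invr_ge0 ?mulr_ge0 // ltW.
move=> g [mg bg] M M0 HM.
have Hraw : forall y : N.-tuple S, `|raw g y| <= Nn * M.
  move=> y; have e : raw g y = Nn * U_op N g y.
    by rewrite /U_op mulrA mulfV ?mul1r // gt_eqF.
  by rewrite e normrM ger0_norm ?(ltW Nn0) // ler_wpM2l ?(ltW Nn0).
have Hfs := HC g (Nn * M) (mulr_ge0 (ltW Nn0) M0) Hraw.
have mfs : measurable_fun setT (fun w => fs g (X w)).
  rewrite /fs; apply: measurable_sum => p.
  exact: measurableT_comp mg (measurableT_comp (mperm0 p) mX).
have := Rint_bound P mfs (fun w => Hfs (X w)).
rewrite (E_fs mX hX mg bg) normrM (ger0_norm (ltW K0)) => h.
rewrite mulr1 -(ler_pM2l K0).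
apply: le_trans h _.
rewrite le_eqVlt; apply/orP; left; apply/eqP.
by field; rewrite gt_eqF.
Qed.

Lemma bmeasD d (S : measurableType d) (R : realType) n (f1 f2 : n.-tuple S -> R) :
  bmeas f1 -> bmeas f2 -> bmeas (fun x => f1 x + f2 x).
Proof.
move=> [m1 [M1 h1]] [m2 [M2 h2]]; split; first exact: measurable_funD.
by exists (M1 + M2) => x; apply: le_trans (ler_normD _ _) (lerD (h1 x) (h2 x)).
Qed.

Lemma bmeasZ d (S : measurableType d) (R : realType) n (f : n.-tuple S -> R) (a : R) :
  bmeas f -> bmeas (fun x => a * f x).
Proof.
move=> [m1 [M1 h1]]; split; first by apply: measurable_funM => //; exact: measurable_cst.
exists (`|a| * M1) => x; rewrite normrM; apply: ler_wpM2l => //.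
Qed.

Lemma bmeasB d (S : measurableType d) (R : realType) n (f1 f2 : n.-tuple S -> R) :
  bmeas f1 -> bmeas f2 -> bmeas (fun x => f1 x - f2 x).
Proof.
move=> [m1 [M1 h1]] [m2 [M2 h2]]; split; first exact: measurable_funB.
by exists (M1 + M2) => x; apply: le_trans (ler_normB _ _) (lerD (h1 x) (h2 x)).
Qed.

Lemma U_lin (S : Type) (R : realType) n N (f f1 f2 : n.-tuple S -> R) a b y :
  U_op N (fun x => f x - (a * f1 x + b * f2 x)) y =
  U_op N f y - (a * U_op N f1 y + b * U_op N f2 y).
Proof.
rewrite /U_op sumrB big_split /= -!mulr_sumr; ring.
Qed.

Unset Implicit Arguments.

Theorem lemma5 (R : realType) (d : measure_display) (S : measurableType d)
  (d' : measure_display) (Om : measurableType d') (P : probability Om R)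
  (n N : nat) (hn : (0 < n)%N) (hnN : (n <= N)%N)
  (X : Om -> n.-tuple S) (mX : measurable_fun setT X)
  (hX : exchangeable P X) :
  let E := fun g : n.-tuple S -> R => Rintegral P setT (fun w => g (X w)) in
  (* well defined *)
  (forall g1 g2, bmeas g1 -> bmeas g2 ->
     U_op N g1 = U_op N g2 -> E g1 = E g2) /\
  (* linear *)
  (forall g g1 g2 (a b : R), bmeas g -> bmeas g1 -> bmeas g2 ->
     (forall x, U_op N g x = a * U_op N g1 x + b * U_op N g2 x) ->
     E g = a * E g1 + b * E g2) /\
  (* bounded *)
  (exists C : R, forall g, bmeas g -> `|E g| <= C * supnorm (U_op N g)) /\
  (* operator norm >= 1 *)
  (forall C : R, (forall g, bmeas g -> `|E g| <= C * supnorm (U_op N g)) ->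
     1 <= C).
Proof.
move=> E.
have [C [C0 HC]] := Ebound hn hnN mX hX.
have intE : forall g, bmeas g -> P.-integrable setT (EFin \o (fun w => g (X w))).
  by move=> g [mg bg]; exact: integ.
have [w _] : exists w : Om, True.
  case: (pselect (exists w : Om, True)) => // nw; exfalso.
  have h : [set: Om] = set0.
    by apply/seteqP; split => // w _; apply: nw; exists w.
  by have := P1 P; rewrite h measure0 => -[] /eqP; rewrite eq_sym oner_eq0.
pose y0 : N.-tuple S := [tuple tnth (X w) (Ordinal hn) | _ < N].
have L2 : forall g g1 g2 (a b : R), bmeas g -> bmeas g1 -> bmeas g2 ->
     (forall x, U_op N g x = a * U_op N g1 x + b * U_op N g2 x) ->
     E g = a * E g1 + b * E g2.
  move=> g g1 g2 a b bg bg1 bg2 hU.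
  pose h := fun x => g x - (a * g1 x + b * g2 x).
  have bh : bmeas h by apply: bmeasB => //; apply: bmeasD; apply: bmeasZ.
  have hU0 : forall y : N.-tuple S, `|U_op N h y| <= 0.
    by move=> y; rewrite /h U_lin hU subrr normr0.
  have := HC h bh 0 (lexx 0) hU0.
  have eh : E h = E g - (a * E g1 + b * E g2).
    have ia1 := intE _ (bmeasZ a bg1).
    have ib2 := intE _ (bmeasZ b bg2).
    rewrite /E /h RintegralB //; last exact: (intE _ (bmeasD (bmeasZ a bg1) (bmeasZ b bg2))).
    - rewrite RintegralD // !RintegralZl //; exact: intE.
    - exact: intE.
  move=> hle; apply/eqP; rewrite -subr_eq0 -eh -normr_le0 -(mulr0 C); exact: hle.
split.
  move=> g1 g2 bg1 bg2 eU.
  have := L2 g1 g2 g2 1 0 bg1 bg2 bg2.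
  by rewrite mul1r mul0r addr0; apply => x; rewrite eU mul1r mul0r addr0.
split; first exact: L2.
have ubU : forall g : n.-tuple S -> R, bmeas g -> has_ubound (range (fun x => `|U_op N g x|)).
  move=> g [mg [Mg hg]].
  have Mg0 : 0 <= Mg by apply: le_trans (normr_ge0 _) (hg (X w)).
  exists (`|(N ^_ n)%:R^-1| * (Mg *+ #|{ffun 'I_n -> 'I_N}|)) => _ [y _ <-].
  rewrite /U_op normrM; apply: ler_wpM2l => //.
  apply: le_trans (ler_norm_sum _ _ _) _.
  apply: le_trans (ler_sum _ (fun s _ => hg (subtuple s y))) _.
  rewrite sumr_const; apply: ler_wpMn2l => //.
  exact: (max_card (T := {ffun 'I_n -> 'I_N})).
have supb : forall g : n.-tuple S -> R, bmeas g -> forall y, `|U_op N g y| <= supnorm (U_op N g).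
  by move=> g bg y; apply: (ub_le_sup (ubU g bg)); exists y.
split.
  exists C => g bg; apply: HC => //; last exact: supb g bg.
  exact: le_trans (normr_ge0 _) (supb g bg y0).
move=> C' HC'.
pose g1 := fun _ : n.-tuple S => (1 : R).
have bg1 : bmeas g1.
  by split; [exact: measurable_cst | exists 1 => x; rewrite normr1].
have U1 : forall y : N.-tuple S, U_op N g1 y = 1.
  move=> y; rewrite /U_op sumr_const.
  have -> : #|[pred s : {ffun 'I_n -> 'I_N} | injectiveb s]| = (N ^_ n)%N.
    by rewrite -cardsE card_inj_ffuns !card_ord.
  by rewrite mulVf // pnatr_eq0 -lt0n ffact_gt0.
have E1 : E g1 = 1 by rewrite /E /g1 Rintegral_cst // P1 mul1r.
have S1 : supnorm (U_op N g1) = 1.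
  rewrite /supnorm.
  have -> : range (fun x => `|U_op N g1 x|) = [set (1 : R)].
    apply/seteqP; split => [_ [y _ <-]|_ ->]; first by rewrite /= U1 normr1.
    by exists y0 => //; rewrite U1 normr1.
  exact: sup1.
by have := HC' g1 bg1; rewrite E1 S1 normr1 mulr1.
Qed.
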